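(* Let $k\in[n]$, let $\Gamma^{-1/2}\Sigma\Gamma^{-1/2}=V\Lambda V^T$ with $V$ orthogonal and $\Lambda=\mathrm{diag}(\lambda_1,\dots,\lambda_n)$, and let $A$ be the symmetric matrix with $A_{ii}=\frac{V_{ki}^2}{4\lambda_i}+\sum_{\ell=1}^n\frac{V_{k\ell}^2}{2(\lambda_i+\lambda_\ell)}$ and $A_{ij}=\frac{V_{ki}V_{kj}}{2(\lambda_i+\lambda_j)}$ for $i\neq j$. Then all eigenvalues of $\Lambda^{1/2}A\Lambda^{1/2}$ are real and lie in the open interval $(0,1)$.
   Context: $\Sigma\in\mathbb{R}^{n\times n}$ is symmetric positive definite and $\Gamma=\mathrm{diag}(\gamma_1,\dots,\gamma_n)$ with all $\gamma_i>0$; hence $\Gamma^{-1/2}\Sigma\Gamma^{-1/2}$ is symmetric positive definite and all $\lambda_i>0$. *)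

(* Defs.v *)
From HB Require Import structures.
From mathcomp Require Import all_boot all_order all_algebra.
From mathcomp Require Import complex.
Set Implicit Arguments. Unset Strict Implicit. Unset Printing Implicit Defensive.
Import Order.TTheory GRing.Theory Num.Theory.
Local Open Scope ring_scope.

Definition spd (R : rcfType) (n : nat) (S : 'M[R]_n) : Prop :=
  S^T = S /\ forall x : 'cV[R]_n, x != 0 -> 0 < (x^T *m S *m x) 0 0.

Definition orthogonal_mx (R : rcfType) (n : nat) (V : 'M[R]_n) : Prop :=
  V *m V^T = 1%:M.

Definition diag_sqrt (R : rcfType) (n : nat) (d : 'rV[R]_n) : 'M[R]_n :=
  diag_mx (\row_i Num.sqrt (d 0 i)).
Definition diag_invsqrt (R : rcfType) (n : nat) (d : 'rV[R]_n) : 'M[R]_n :=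
  diag_mx (\row_i (Num.sqrt (d 0 i))^-1).

Definition Amat (R : rcfType) (n : nat) (V : 'M[R]_n) (lam : 'rV[R]_n)
  (k : 'I_n) : 'M[R]_n :=
  \matrix_(i, j)
    if i == j then
      V k i ^+ 2 / (4 * lam 0 i)
      + \sum_(l < n) V k l ^+ 2 / (2 * (lam 0 i + lam 0 l))
    else V k i * V k j / (2 * (lam 0 i + lam 0 j)).

Definition cmx (R : rcfType) (m n : nat) (M : 'M[R]_(m, n)) : 'M[R[i]]_(m, n) :=
  map_mx (fun x => (x%:C)%C) M.

(* Main.v *)
Require Import Defs.
From HB Require Import structures.
From mathcomp Require Import all_boot all_order all_algebra.
From mathcomp Require Import complex ring lra.
Set Implicit Arguments. Unset Strict Implicit.
Import Order.TTheory GRing.Theory Num.Theory.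
Local Open Scope ring_scope.
Definition cauchyQ (R : rcfType) (n : nat) (a u : 'I_n -> R) : R :=
  \sum_i \sum_j u i * u j / (a i + a j).

Lemma cauchy_psd (R : rcfType) (n : nat) (a : 'I_n -> R) :
  (forall i, 0 < a i) -> forall u, 0 <= cauchyQ a u.
Proof.
move=> ha u.
have [m Hm] : exists m, (#|[pred i | (u i != 0)%R]| <= m)%N by eexists.
elim: m u Hm => [|m IH] u Hm.
  have u0 : forall i, u i = 0.
    move=> i; apply/eqP; apply: contraT => ui.
    have : (0 < #|[pred i | (u i != 0)%R]|)%N by apply/card_gt0P; exists i.
    by rewrite leqn0 in Hm; rewrite (eqP Hm).
  rewrite /cauchyQ big1 // => i _; rewrite big1 // => j _; by rewrite u0 !mul0r.
have [i0 ui0|nz] := pickP [pred i | (u i != 0)%R]; last first.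
  rewrite /cauchyQ big1 // => i _; rewrite big1 // => j _.
  by move: (nz i) => /= /negbFE/eqP ->; rewrite !mul0r.
have ui0p : u i0 != 0 := ui0.
set w := fun i => u i * (a i - a i0) / (a i + a i0).
set f := fun i => u i / (a i0 + a i).
have neq : forall i j, a i + a j != 0.
  by move=> i j; apply/lt0r_neq0; rewrite addr_gt0.
have E : cauchyQ a u = \sum_i \sum_j (2 * a i0 * (f i * f j)) + cauchyQ a w.
  rewrite /cauchyQ -big_split /=; apply: eq_bigr => i _; rewrite -big_split /=.
  apply: eq_bigr => j _; rewrite /f /w.
  have := neq i j; have := neq i0 i; have := neq i0 j; have := neq i i0; have := neq j i0.
  move=> h1 h2 h3 h4 h5.
  by field; rewrite ?h1 ?h2 ?h3 ?h4 ?h5.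
have E2 : \sum_i \sum_j (2 * a i0 * (f i * f j)) = 2 * a i0 * (\sum_i f i) ^+ 2.
  rewrite expr2 mulr_suml mulr_sumr; apply: eq_bigr => i _.
  by rewrite mulr_sumr mulr_sumr; apply: eq_bigr => j _.
rewrite E2 in E.
have Hw : (#|[pred i | (w i != 0)%R]| <= m)%N.
  have sub : [pred i | (w i != 0)%R] \subset [predD1 [pred i | (u i != 0)%R] & i0].
    apply/subsetP => i /=; rewrite !inE /w.
    case: (eqVneq i i0) => [->|_]; first by rewrite subrr mulr0 mul0r eqxx.
    by apply: contra => /eqP ->; rewrite !mul0r.
  move: (subset_leq_card sub); rewrite (cardD1 i0 [pred i | (u i != 0)%R]) in Hm.
  by rewrite inE /= ui0p add1n ltnS in Hm => h; apply: leq_trans h Hm.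
rewrite E; apply: addr_ge0; last exact: IH.
by apply: mulr_ge0; [apply: mulr_ge0 => //; exact: ltW | exact: sqr_ge0].
Qed.
Section Core.
Variables (R : rcfType) (n : nat) (lam s v : 'I_n -> R).
Hypotheses (hs : forall i, 0 < s i) (hl : forall i, lam i = s i ^+ 2)
  (hv : \sum_l v l ^+ 2 = 1).

Definition Ae i j := if i == j then v i ^+ 2 / (4 * lam i)
   + \sum_l v l ^+2 / (2 * (lam i + lam l)) else v i * v j / (2 * (lam i + lam j)).
Definition Me i j := s i * Ae i j * s j.
Definition Qf (y : 'I_n -> R) := \sum_i \sum_j y i * Me i j * y j.
Definition Pt (y : 'I_n -> R) i j := y i * s i * (v i * v j / (2 * (lam i + lam j))) * s j * y j.
Definition Tt (y : 'I_n -> R) i j := y i ^+ 2 * lam i * (v j ^+ 2 / (2 * (lam i + lam j))).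

Lemma lam_gt0 i : 0 < lam i.
Proof. by rewrite hl exprn_gt0. Qed.

Ltac posR := repeat first [ apply: addr_gt0 | apply: mulr_gt0 | apply: divr_gt0 | apply: exprn_gt0 | apply: hs | apply: lam_gt0 | exact: ltr0Sn ].
Ltac side := repeat (apply/andP; split); apply/lt0r_neq0; posR.

Lemma den_neq0 i j : 2 * (lam i + lam j) != 0.
Proof. by apply/lt0r_neq0; rewrite mulr_gt0 // addr_gt0 // lam_gt0. Qed.

Lemma Qsplit y : Qf y = \sum_i \sum_j Pt y i j + \sum_i \sum_j Tt y i j.
Proof.
rewrite /Qf -big_split /=; apply: eq_bigr => i _.
rewrite [LHS](bigD1 i) // [X in _ = X + _](bigD1 i) //=.
have -> : \sum_(j < n | j != i) y i * Me i j * y j = \sum_(j < n | j != i) Pt y i j.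
  apply: eq_bigr => j ji; rewrite /Me /Ae /Pt eq_sym (negbTE ji); ring.
rewrite /Tt -mulr_sumr /Me /Ae /Pt eqxx.
set d := \sum_l _.
set S := \sum_(j < n | j != i) _.
have h1 := den_neq0 i i.
have h2 : 4 * lam i != 0 by apply/lt0r_neq0; rewrite mulr_gt0 // lam_gt0.
rewrite hl in h1 h2 *.
by field; side.
Qed.

Lemma Tt_ge0 y i j : 0 <= Tt y i j.
Proof.
rewrite /Tt; apply: mulr_ge0; first by apply: mulr_ge0; [exact: sqr_ge0| exact: ltW (lam_gt0 i)].
by apply: divr_ge0; [exact: sqr_ge0| rewrite mulr_ge0 // addr_ge0 // ltW // lam_gt0].
Qed.

Lemma P_cauchy y : \sum_i \sum_j Pt y i j = cauchyQ lam (fun i => y i * s i * v i) / 2.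
Proof.
rewrite /cauchyQ mulr_suml; apply: eq_bigr => i _; rewrite mulr_suml; apply: eq_bigr => j _.
rewrite /Pt. have h := den_neq0 i j.
have h' : lam i + lam j != 0 by apply/lt0r_neq0; rewrite addr_gt0 // lam_gt0.
by field; rewrite ?h'.
Qed.

Lemma Qf_ge0 y : 0 <= Qf y.
Proof.
rewrite Qsplit P_cauchy; apply: addr_ge0.
  apply: divr_ge0 => //; apply: cauchy_psd; exact: lam_gt0.
by apply: sumr_ge0 => i _; apply: sumr_ge0 => j _; exact: Tt_ge0.
Qed.

Lemma Qf_gt0 y j0 : y j0 != 0 -> 0 < Qf y.
Proof.
move=> yj0.
have [l0 vl0] : exists l0, v l0 != 0.
  apply/existsP; apply: contraT; rewrite negb_exists => /forallP H.
  move: hv; rewrite big1 => [|l _]; first by move/eqP; rewrite eq_sym oner_eq0.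
  by move: (H l); rewrite negbK => /eqP ->; rewrite expr2 mulr0.
rewrite Qsplit P_cauchy.
have c0 : 0 <= cauchyQ lam (fun i => y i * s i * v i) / 2.
  apply: divr_ge0 => //; apply: cauchy_psd; exact: lam_gt0.
have pos : 0 < Tt y j0 l0.
  rewrite /Tt; apply: mulr_gt0; first by apply: mulr_gt0; [rewrite exprn_even_gt0 //| exact: lam_gt0].
  by apply: divr_gt0; [rewrite exprn_even_gt0 //| rewrite mulr_gt0 // addr_gt0 // lam_gt0].
have s1 : Tt y j0 l0 <= \sum_j Tt y j0 j.
  rewrite (bigD1 l0) //= lerDl; apply: sumr_ge0 => j _; exact: Tt_ge0.
have s2 : \sum_j Tt y j0 j <= \sum_i \sum_j Tt y i j.
  rewrite [X in _ <= X](bigD1 j0) //= lerDl; apply: sumr_ge0 => i _.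
  by apply: sumr_ge0 => j _; exact: Tt_ge0.
lra.
Qed.

Lemma Qf_le y : 2 * Qf y <= \sum_i y i ^+ 2.
Proof.
set al := fun i j => lam j * y i ^+ 2 * v j ^+ 2 / (2 * (lam i + lam j)).
have step : forall i j, 2 * Pt y i j <= al i j + al j i.
  move=> i j; rewrite /al /Pt.
  have h := den_neq0 i j.
  have e : al i j + al j i - 2 * Pt y i j =
     (s j * y i * v j - s i * y j * v i) ^+ 2 / (2 * (lam i + lam j)).
    rewrite /al /Pt (addrC (lam j) (lam i)) !hl.
    have h' : 2 * (s i ^+ 2 + s j ^+ 2) != 0 by rewrite -!hl.
    by field; side.
  rewrite -subr_ge0; rewrite /al /Pt in e; rewrite e.
  by apply: divr_ge0; [exact: sqr_ge0| rewrite mulr_ge0 // addr_ge0 // ltW // lam_gt0].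
have e1 : \sum_i \sum_j (al i j + al j i) = 2 * \sum_i \sum_j al i j.
  under eq_bigr do rewrite big_split /=.
  rewrite big_split /= mulr_natl mulr2n; congr (_ + _); exact: exchange_big.
have le1 : \sum_i \sum_j (2 * Pt y i j) <= \sum_i \sum_j (al i j + al j i).
  by apply: ler_sum => i _; apply: ler_sum => j _; exact: step.
have e3 : \sum_i \sum_j (2 * Pt y i j) = 2 * \sum_i \sum_j Pt y i j.
  by rewrite mulr_sumr; apply: eq_bigr => i _; rewrite mulr_sumr.
have e4 : \sum_i \sum_j (al i j + Tt y i j) = \sum_i \sum_j al i j + \sum_i \sum_j Tt y i j.
  by under eq_bigr do rewrite big_split /=; rewrite big_split.
have e2 : \sum_i \sum_j (al i j + Tt y i j) = (\sum_i y i ^+ 2) / 2.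
  rewrite mulr_suml; apply: eq_bigr => i _.
  transitivity (\sum_j (y i ^+ 2 / 2) * v j ^+ 2).
    apply: eq_bigr => j _; rewrite /al /Tt.
    have h' : 2 * (lam i + lam j) != 0 := den_neq0 i j.
    by field; side.
  by rewrite -mulr_sumr hv mulr1.
have q := Qsplit y.
lra.
Qed.
End Core.
Lemma entry_ii (R : rcfType) n (A B : 'M[R]_n) i :
  (A^T *m B *m A) i i = ((col i A)^T *m B *m col i A) 0 0.
Proof.
rewrite !mxE; apply: eq_bigr => m _; rewrite !mxE; congr (_ * _).
by apply: eq_bigr => l _; rewrite !mxE.
Qed.

Lemma lam_pos (R : rcfType) (n : nat)
  (Sigma : 'M[R]_n) (gamma : 'rV[R]_n) (V : 'M[R]_n) (lam : 'rV[R]_n) :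
  spd Sigma -> (forall i, 0 < gamma 0 i) -> orthogonal_mx V ->
  diag_invsqrt gamma *m Sigma *m diag_invsqrt gamma = V *m diag_mx lam *m V^T ->
  forall i, 0 < lam 0 i.
Proof.
move=> [_ Hs] Hg Hor Hd i.
have VtV : V^T *m V = 1%:M := mulmx1C Hor.
set G := diag_invsqrt gamma in Hd.
have D : V^T *m (G *m Sigma *m G) *m V = diag_mx lam.
  by rewrite Hd !mulmxA VtV mul1mx -mulmxA VtV mulmx1.
have D2 : V^T *m (G *m Sigma *m G) *m V = (G *m V)^T *m Sigma *m (G *m V).
  by rewrite trmx_mul /G /diag_invsqrt tr_diag_mx !mulmxA.
have -> : lam 0 i = diag_mx lam i i by rewrite mxE eqxx mulr1n.
rewrite -D D2 entry_ii; apply: Hs.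
apply/negP => /eqP y0.
have Vli : forall l, V l i = 0.
  move=> l; move: (congr1 (fun m : 'cV[R]_n => m l 0) y0); rewrite /G /diag_invsqrt mul_diag_mx !mxE.
  move/eqP; rewrite mulf_eq0 => /orP [|/eqP //].
  by rewrite invr_eq0 => /eqP h; move: (Hg l); rewrite -sqrtr_gt0 h ltxx.
move: (congr1 (fun m : 'M[R]_n => m i i) VtV); rewrite !mxE eqxx /= big1 => [|l _]; last by rewrite !mxE Vli mulr0.
by move/eqP; rewrite eq_sym oner_eq0.
Qed.

Lemma Re_sum (R : rcfType) n (F : 'I_n -> R[i]) :
  complex.Re (\sum_i F i) = \sum_i complex.Re (F i).
Proof. elim/big_rec2: _ => // i y c _ <-. by case: (F i); case: c. Qed.
Lemma Im_sum (R : rcfType) n (F : 'I_n -> R[i]) :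
  complex.Im (\sum_i F i) = \sum_i complex.Im (F i).
Proof. elim/big_rec2: _ => // i y c _ <-. by case: (F i); case: c. Qed.
Lemma ReM (R : rcfType) (u w : R[i]) :
  complex.Re (u * w) = complex.Re u * complex.Re w - complex.Im u * complex.Im w.
Proof. by case: u; case: w. Qed.
Lemma ImM (R : rcfType) (u w : R[i]) :
  complex.Im (u * w) = complex.Re u * complex.Im w + complex.Im u * complex.Re w.
Proof. by case: u; case: w. Qed.

Theorem mainTheorem3 (R : rcfType) (n : nat)
  (Sigma : 'M[R]_n) (gamma : 'rV[R]_n) (V : 'M[R]_n) (lam : 'rV[R]_n)
  (k : 'I_n) :
  spd Sigma ->
  (forall i, 0 < gamma 0 i) ->
  orthogonal_mx V ->
  diag_invsqrt gamma *m Sigma *m diag_invsqrt gamma = V *m diag_mx lam *m V^T ->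
  forall z : R[i],
    eigenvalue (cmx (diag_sqrt lam *m Amat V lam k *m diag_sqrt lam)) z ->
    exists r : R, z = (r%:C)%C /\ 0 < r < 1.
Proof.
move=> Hspd Hg Hor Hd z /eigenvalueP [x Hx xnz].
have Hlam := lam_pos Hspd Hg Hor Hd.
set s := fun i => Num.sqrt (lam 0 i).
set v := fun l => V k l.
set lm := fun i => lam 0 i.
have hs : forall i, 0 < s i by move=> i; rewrite /s sqrtr_gt0.
have hl : forall i, lm i = s i ^+ 2 by move=> i; rewrite /s sqr_sqrtr // ltW.
have hv : \sum_l v l ^+ 2 = 1.
  have H := congr1 (fun m : 'M[R]_n => m k k) Hor.
  rewrite /= !mxE eqxx mulr1n in H; rewrite -H.
  by apply: eq_bigr => l _; rewrite mxE expr2.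
have HM : forall i j, (diag_sqrt lam *m Amat V lam k *m diag_sqrt lam) i j = Me lm s v i j.
  by move=> i j; rewrite /diag_sqrt mul_mx_diag mul_diag_mx !mxE.
set M := Me lm s v.
have Msym : forall i j, M i j = M j i.
  move=> i j; rewrite /M /Me /Ae [i == j]eq_sym.
  case: eqP => [->//|_]; rewrite (addrC (lm j)); ring.
set p := fun j => complex.Re (x 0 j).
set q := fun j => complex.Im (x 0 j).
set a := complex.Re z. set b := complex.Im z.
have Ent : forall j, \sum_i x 0 i * ((M i j)%:C)%C = z * x 0 j.
  move=> j; move: (congr1 (fun m : 'rV[R[i]]_n => m 0 j) Hx) => /=.
  rewrite [in RHS]mxE [in LHS]mxE => <-.
  by apply: eq_bigr => i _; rewrite /cmx mxE HM.
have ReE : forall j, \sum_i p i * M i j = a * p j - b * q j.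
  move=> j; move: (congr1 (@complex.Re R) (Ent j)); rewrite Re_sum ReM => <-.
  by apply: eq_bigr => i _; rewrite ReM /= mulr0 subr0.
have ImE : forall j, \sum_i q i * M i j = a * q j + b * p j.
  move=> j; move: (congr1 (@complex.Im R) (Ent j)); rewrite Im_sum ImM => <-.
  by apply: eq_bigr => i _; rewrite ImM /= mulr0 add0r.
have Bil : forall y w : 'I_n -> R,
    \sum_i \sum_j y i * M i j * w j = \sum_j (\sum_i y i * M i j) * w j.
  move=> y w; rewrite exchange_big /=; apply: eq_bigr => j _; by rewrite mulr_suml.
set Np := \sum_j p j ^+ 2. set Nq := \sum_j q j ^+ 2.
set Cr := \sum_j p j * q j.
have QP : Qf lm s v p = a * Np - b * Cr.
  rewrite /Qf -/M Bil; under eq_bigr do rewrite ReE.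
  rewrite /Np /Cr !mulr_sumr -sumrB; apply: eq_bigr => j _; ring.
have QQ : Qf lm s v q = a * Nq + b * Cr.
  rewrite /Qf -/M Bil; under eq_bigr do rewrite ImE.
  rewrite /Nq /Cr !mulr_sumr -big_split /=; apply: eq_bigr => j _.
ring.
have BPQ : \sum_i \sum_j p i * M i j * q j = a * Cr - b * Nq.
  rewrite Bil; under eq_bigr do rewrite ReE.
  rewrite /Nq /Cr !mulr_sumr -sumrB; apply: eq_bigr => j _; ring.
have BQP : \sum_i \sum_j q i * M i j * p j = a * Cr + b * Np.
  rewrite Bil; under eq_bigr do rewrite ImE.
  rewrite /Np /Cr !mulr_sumr -big_split /=; apply: eq_bigr => j _; ring.
have Bsym : \sum_i \sum_j p i * M i j * q j = \sum_i \sum_j q i * M i j * p j.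
  rewrite exchange_big; apply: eq_bigr => j _; apply: eq_bigr => i _.
  by rewrite Msym; ring.
have [j0 xj0] : exists j, x 0 j != 0.
  apply/existsP; apply: contraT; rewrite negb_exists => /forallP H.
  suff : x = 0 by move/eqP: xnz.
  apply/matrixP => i j; rewrite ord1 !mxE; apply/eqP; move: (H j); by rewrite negbK.
have Npge : 0 <= Np by apply: sumr_ge0 => j _; exact: sqr_ge0.
have Nqge : 0 <= Nq by apply: sumr_ge0 => j _; exact: sqr_ge0.
have Qpge := Qf_ge0 v hs hl p.
have Qqge := Qf_ge0 v hs hl q.
have Qple := Qf_le hs hl hv p.
have Qqle := Qf_le hs hl hv q.
have pqnz : (p j0 != 0) || (q j0 != 0).
  move: xj0; rewrite /p /q; case: (x 0 j0) => c d /=.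
  by apply: contraR; rewrite negb_or !negbK => /andP [/eqP -> /eqP ->].
have Npos : 0 < Np + Nq /\ 0 < Qf lm s v p + Qf lm s v q.
  case/orP: pqnz => nz.
    have h1 : p j0 ^+ 2 <= Np by rewrite /Np (bigD1 j0) //= lerDl sumr_ge0 // => j _; exact: sqr_ge0.
    have h2 : 0 < p j0 ^+ 2 by rewrite exprn_even_gt0.
    have := Qf_gt0 hs hl hv nz; lra.
  have h1 : q j0 ^+ 2 <= Nq by rewrite /Nq (bigD1 j0) //= lerDl sumr_ge0 // => j _; exact: sqr_ge0.
  have h2 : 0 < q j0 ^+ 2 by rewrite exprn_even_gt0.
  have := Qf_gt0 hs hl hv nz; lra.
case: Npos => Npos Qpos.
have bN : b * (Np + Nq) = 0.
  have := Bsym; rewrite BPQ BQP => e.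
  have -> : b * (Np + Nq) = - ((a * Cr - b * Nq) - (a * Cr + b * Np)) by ring.
  by rewrite e subrr oppr0.
have b0 : b = 0.
  move/eqP: bN; rewrite mulf_eq0 => /orP [/eqP //|/eqP h]; by move: Npos; rewrite h ltxx.
have aE : a = (Qf lm s v p + Qf lm s v q) / (Np + Nq).
  rewrite QP QQ; have h : Np + Nq != 0 by apply/lt0r_neq0.
  by field.
exists a; split.
  by rewrite [LHS]complexE -/a -/b b0 mulr0 addr0.
rewrite aE; apply/andP; split.
  by apply: divr_gt0.
rewrite ltr_pdivrMr // mul1r. rewrite -/Np -/Nq in Qple Qqle. lra.
Qed.
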